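(* Let $\nu\ge1$, $d:\mathbb{Z}^\nu\to\mathbb{C}$ bounded, $J=J_0+D$ on $\ell^2(\mathbb{Z}^\nu)$. (i) If $a\in\mathbb{R}$ is not an eigenvalue of $J_0+\Re(D)$, then $J$ has no boundary eigenvalue with real part $a$. (ii) Let $b\in\mathbb{R}$. If $\Im(d(k))\neq b$ for all $k\in\mathbb{Z}^\nu$, then $J$ has no boundary eigenvalue with imaginary part $b$.
   Context: $J_0$ is the discrete Laplacian on $\ell^2(\mathbb{Z}^\nu)$: $(J_0u)(k)=\sum_{l\in\mathbb{Z}^\nu:\|l\|_1=1}u(k+l)$, where $\|l\|_1=\sum_{j=1}^\nu|l_j|$. For a bounded $d:\mathbb{Z}^\nu\to\mathbb{C}$, $D$ is multiplication by $d$, and $\Re(D)$, $\Im(D)$ are multiplication by $\Re(d(k))$, $\Im(d(k))$. The numerical range is $\operatorname{Num}(J)=\{\langle Ju,u\rangle:\|u\|=1\}$, and a boundary eigenvalue of $J$ is an eigenvalue of $J$ lying in the topological boundary of $\operatorname{Num}(J)$. *)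

(* Defs.v *)
From Stdlib Require Import Reals Lra ZArith List.
Open Scope R_scope.

Definition Cx : Type := (R * R)%type.
Definition Re (z : Cx) : R := fst z.
Definition Im (z : Cx) : R := snd z.
Definition C0 : Cx := (0, 0).
Definition RtoC (a : R) : Cx := (a, 0).
Definition Cadd (z w : Cx) : Cx := (fst z + fst w, snd z + snd w).
Definition Csub (z w : Cx) : Cx := (fst z - fst w, snd z - snd w).
Definition Cmul (z w : Cx) : Cx :=
  (fst z * fst w - snd z * snd w, fst z * snd w + snd z * fst w).
Definition Cconj (z : Cx) : Cx := (fst z, - snd z).
Definition Cmod (z : Cx) : R := sqrt (fst z * fst z + snd z * snd z).

Definition lat (nu : nat) (k : list Z) : Prop := length k = nu.

(** k + s e_j  (change the j-th coordinate of k by s) *)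
Definition shift (k : list Z) (j : nat) (s : Z) : list Z :=
  firstn j k ++ (nth j k 0%Z + s)%Z :: skipn (S j) k.

Definition fsum (F : list (list Z)) (f : list Z -> Cx) : Cx :=
  fold_right (fun k acc => Cadd (f k) acc) C0 F.

(** f : Z^nu -> Cx is (unconditionally) summable over Z^nu with sum S:
    the net of finite partial sums converges to S. *)
Definition has_sum (nu : nat) (f : list Z -> Cx) (S : Cx) : Prop :=
  forall eps : R, 0 < eps ->
    exists F0 : list (list Z), Forall (lat nu) F0 /\
      forall F : list (list Z), NoDup F -> Forall (lat nu) F -> incl F0 F ->
        Cmod (Csub (fsum F f) S) < eps.

Definition l2 (nu : nat) (u : list Z -> Cx) : Prop :=
  exists S : Cx, has_sum nu (fun k => RtoC (Cmod (u k) * Cmod (u k))) S.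

Definition unit_norm (nu : nat) (u : list Z -> Cx) : Prop :=
  has_sum nu (fun k => RtoC (Cmod (u k) * Cmod (u k))) (RtoC 1).

Definition inner_is (nu : nat) (v u : list Z -> Cx) (z : Cx) : Prop :=
  has_sum nu (fun k => Cmul (v k) (Cconj (u k))) z.

Definition Operator := (list Z -> Cx) -> (list Z -> Cx).

(** discrete Laplacian: (J0 u)(k) = sum_{||l||_1 = 1} u(k+l)
    = sum_{j < nu} (u(k + e_j) + u(k - e_j)) *)
Definition J0 (nu : nat) : Operator := fun u k =>
  fold_right (fun j acc => Cadd (Cadd (u (shift k j 1%Z)) (u (shift k j (-1)%Z))) acc)
             C0 (seq 0 nu).

Definition Mult (d : list Z -> Cx) : Operator := fun u k => Cmul (d k) (u k).

Definition Jop (nu : nat) (d : list Z -> Cx) : Operator :=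
  fun u k => Cadd (J0 nu u k) (Mult d u k).

Definition ReD (d : list Z -> Cx) : list Z -> Cx := fun k => RtoC (Re (d k)).

Definition bounded_on (nu : nat) (d : list Z -> Cx) : Prop :=
  exists M : R, forall k, lat nu k -> Cmod (d k) <= M.

Definition Num (nu : nat) (A : Operator) (z : Cx) : Prop :=
  exists u, l2 nu u /\ unit_norm nu u /\ inner_is nu (A u) u z.

Definition eigenvalue (nu : nat) (A : Operator) (lam : Cx) : Prop :=
  exists u, l2 nu u /\ (exists k, lat nu k /\ u k <> C0) /\
    forall k, lat nu k -> A u k = Cmul lam (u k).

Definition in_boundary (S : Cx -> Prop) (z : Cx) : Prop :=
  forall eps : R, 0 < eps ->
    (exists w, S w /\ Cmod (Csub w z) < eps) /\
    (exists w, ~ S w /\ Cmod (Csub w z) < eps).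

Definition boundary_eigenvalue (nu : nat) (A : Operator) (lam : Cx) : Prop :=
  eigenvalue nu A lam /\ in_boundary (Num nu A) lam.

(* Main.v *)
Require Import Defs.
From Stdlib Require Import Reals ZArith List.
From Stdlib Require Import Lra Lia Psatz Classical.
Require Import Defs.
Open Scope R_scope.


Definition fsumR (F : list (list Z)) (g : list Z -> R) : R :=
  fold_right (fun k acc => g k + acc) 0 F.
Definition hsR nu (g : list Z -> R) (s : R) : Prop :=
  forall eps, 0 < eps -> exists F0, Forall (lat nu) F0 /\
    forall F, NoDup F -> Forall (lat nu) F -> incl F0 F -> Rabs (fsumR F g - s) < eps.

Lemma fsum_fst F f : fst (fsum F f) = fsumR F (fun k => fst (f k)).
Proof. induction F; simpl; auto. rewrite <- IHF. reflexivity. Qed.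
Lemma fsum_snd F f : snd (fsum F f) = fsumR F (fun k => snd (f k)).
Proof. induction F; simpl; auto. rewrite <- IHF. reflexivity. Qed.

Lemma Cmod_sq z : Cmod z * Cmod z = fst z * fst z + snd z * snd z.
Proof. unfold Cmod. apply sqrt_sqrt. nra. Qed.

Lemma Cmod_le_abs z : Cmod z <= Rabs (fst z) + Rabs (snd z).
Proof.
  destruct z as [x y]; unfold Cmod; simpl.
  rewrite <- (sqrt_Rsqr (Rabs x + Rabs y)) by (pose proof (Rabs_pos x); pose proof (Rabs_pos y); lra).
  apply sqrt_le_1_alt. unfold Rsqr.
  pose proof (Rabs_pos x); pose proof (Rabs_pos y).
  assert (x * x = Rabs x * Rabs x) by (rewrite <- Rabs_mult; rewrite Rabs_pos_eq; nra).
  assert (y * y = Rabs y * Rabs y) by (rewrite <- Rabs_mult; rewrite Rabs_pos_eq; nra).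
  nra.
Qed.

Lemma abs_le_Cmod1 z : Rabs (fst z) <= Cmod z.
Proof. destruct z as [x y]; unfold Cmod; simpl. rewrite <- sqrt_Rsqr_abs.
  apply sqrt_le_1_alt. unfold Rsqr. nra. Qed.
Lemma abs_le_Cmod2 z : Rabs (snd z) <= Cmod z.
Proof. destruct z as [x y]; unfold Cmod; simpl. rewrite <- sqrt_Rsqr_abs.
  apply sqrt_le_1_alt. unfold Rsqr. nra. Qed.

Lemma incl_app_l {A} (l1 l2 l : list A) : incl (l1 ++ l2) l -> incl l1 l.
Proof. intros H x Hx; apply H; apply in_or_app; auto. Qed.
Lemma incl_app_r {A} (l1 l2 l : list A) : incl (l1 ++ l2) l -> incl l2 l.
Proof. intros H x Hx; apply H; apply in_or_app; auto. Qed.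

Lemma hs_of_hsR nu f S :
  hsR nu (fun k => fst (f k)) (fst S) -> hsR nu (fun k => snd (f k)) (snd S) -> has_sum nu f S.
Proof.
  intros H1 H2 eps He.
  destruct (H1 (eps/2)) as [F1 [L1 P1]]; [lra|].
  destruct (H2 (eps/2)) as [F2 [L2 P2]]; [lra|].
  exists (F1 ++ F2); split; [apply Forall_app; auto|].
  intros F ND LF I.
  specialize (P1 F ND LF (incl_app_l _ _ _ I)).
  specialize (P2 F ND LF (incl_app_r _ _ _ I)).
  eapply Rle_lt_trans; [apply Cmod_le_abs|].
  unfold Csub; simpl. rewrite fsum_fst, fsum_snd. lra.
Qed.

Lemma hsR_fst nu f S : has_sum nu f S -> hsR nu (fun k => fst (f k)) (fst S).
Proof.
  intros H eps He. destruct (H eps He) as [F0 [L P]]. exists F0; split; auto.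
  intros F ND LF I. specialize (P F ND LF I).
  eapply Rle_lt_trans; [|apply P]. rewrite <- fsum_fst. apply (abs_le_Cmod1 (Csub (fsum F f) S)).
Qed.
Lemma hsR_snd nu f S : has_sum nu f S -> hsR nu (fun k => snd (f k)) (snd S).
Proof.
  intros H eps He. destruct (H eps He) as [F0 [L P]]. exists F0; split; auto.
  intros F ND LF I. specialize (P F ND LF I).
  eapply Rle_lt_trans; [|apply P]. rewrite <- fsum_snd. apply (abs_le_Cmod2 (Csub (fsum F f) S)).
Qed.

Lemma fsumR_add F g h : fsumR F (fun k => g k + h k) = fsumR F g + fsumR F h.
Proof. induction F; simpl; [ring|]. rewrite IHF; ring. Qed.
Lemma fsumR_scal F c g : fsumR F (fun k => c * g k) = c * fsumR F g.
Proof. induction F; simpl; [ring|]. rewrite IHF; ring. Qed.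
Lemma fsumR_ext nu F g h : Forall (lat nu) F -> (forall k, lat nu k -> g k = h k) ->
  fsumR F g = fsumR F h.
Proof. induction 1; intros E; simpl; auto. rewrite E by auto. rewrite IHForall; auto. Qed.

Lemma hsR_add nu g h s t : hsR nu g s -> hsR nu h t -> hsR nu (fun k => g k + h k) (s + t).
Proof.
  intros H1 H2 eps He.
  destruct (H1 (eps/2)) as [F1 [L1 P1]]; [lra|].
  destruct (H2 (eps/2)) as [F2 [L2 P2]]; [lra|].
  exists (F1 ++ F2); split; [apply Forall_app; auto|].
  intros F ND LF I.
  specialize (P1 F ND LF (incl_app_l _ _ _ I)).
  specialize (P2 F ND LF (incl_app_r _ _ _ I)).
  rewrite fsumR_add.
  replace (fsumR F g + fsumR F h - (s + t)) with ((fsumR F g - s) + (fsumR F h - t)) by ring.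
  eapply Rle_lt_trans; [apply Rabs_triang|]. lra.
Qed.

Lemma hsR_scal nu g s c : hsR nu g s -> hsR nu (fun k => c * g k) (c * s).
Proof.
  intros H eps He.
  pose proof (Rabs_pos c).
  destruct (H (eps / (Rabs c + 1))) as [F0 [L P]].
  { apply Rdiv_lt_0_compat; lra. }
  exists F0; split; auto. intros F ND LF I. specialize (P F ND LF I).
  rewrite fsumR_scal.
  replace (c * fsumR F g - c * s) with (c * (fsumR F g - s)) by ring.
  rewrite Rabs_mult.
  assert (Rabs c * Rabs (fsumR F g - s) <= Rabs c * (eps / (Rabs c + 1))).
  { apply Rmult_le_compat_l; lra. }
  assert (Rabs c * (eps / (Rabs c + 1)) < eps).
  { apply (Rmult_lt_reg_r (Rabs c + 1)); [lra|].
    field_simplify; [|lra]. nra. }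
  lra.
Qed.

Lemma hsR_ext nu g h s : (forall k, lat nu k -> g k = h k) -> hsR nu g s -> hsR nu h s.
Proof.
  intros E H eps He. destruct (H eps He) as [F0 [L P]]. exists F0; split; auto.
  intros F ND LF I. rewrite <- (fsumR_ext nu F g h LF E). auto.
Qed.

Lemma hsR_eqv nu g s t : hsR nu g s -> s = t -> hsR nu g t.
Proof. intros H ->; auto. Qed.

Lemma fsumR_zero F g : Forall (fun k => g k = 0) F -> fsumR F g = 0.
Proof. induction 1; simpl; auto. rewrite H, IHForall; ring. Qed.

Lemma fsumR_single nu p g F : (forall k, lat nu k -> k <> p -> g k = 0) ->
  NoDup F -> Forall (lat nu) F -> In p F -> fsumR F g = g p.
Proof.
  intros Z ND. induction ND; intros LF Ip; [destruct Ip|].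
  inversion LF; subst. simpl.
  destruct Ip as [-> | Ip].
  - rewrite fsumR_zero; [ring|]. rewrite Forall_forall in *. intros k Hk.
    apply Z; auto. intros ->; auto.
  - rewrite IHND; auto. rewrite Z; auto; [ring|]. intros ->; auto.
Qed.

Lemma hsR_single nu p g : lat nu p -> (forall k, lat nu k -> k <> p -> g k = 0) -> hsR nu g (g p).
Proof.
  intros Lp ZZ eps He. exists (p :: nil); split; [constructor; auto|].
  intros F ND LF I. rewrite (fsumR_single nu p g F ZZ ND LF).
  - unfold Rminus; rewrite Rplus_opp_r, Rabs_R0; auto.
  - apply I; simpl; auto.
Qed.

Definition ndp (F : list (list Z)) := nodup (list_eq_dec Z.eq_dec) F.

Lemma ndp_props nu F : Forall (lat nu) F -> NoDup (ndp F) /\ Forall (lat nu) (ndp F) /\ incl F (ndp F).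
Proof.
  unfold ndp; intros L. split; [apply NoDup_nodup|]. split.
  - rewrite Forall_forall in *. intros x Hx. apply L. apply (nodup_In (list_eq_dec Z.eq_dec)); exact Hx.
  - intros x Hx. apply nodup_In; auto.
Qed.

Lemma small_zero s : (forall eps, 0 < eps -> Rabs s < eps) -> s = 0.
Proof.
  intros H. destruct (Req_dec s 0); auto. exfalso.
  specialize (H (Rabs s) (Rabs_pos_lt _ H0)). lra.
Qed.

Lemma hsR_zero nu s : hsR nu (fun _ => 0) s -> s = 0.
Proof.
  intros H. apply small_zero. intros eps He. destruct (H eps He) as [F0 [L P]].
  destruct (ndp_props nu F0 L) as [A [B C]].
  specialize (P _ A B C). rewrite fsumR_zero in P.
  - rewrite <- Rabs_Ropp. replace (- s) with (0 - s) by ring. auto.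
  - rewrite Forall_forall; auto.
Qed.

Lemma fsumR_nonneg F g : Forall (fun k => 0 <= g k) F -> 0 <= fsumR F g.
Proof. induction 1; simpl; lra. Qed.

Lemma fsumR_ge nu F g p : (forall k, lat nu k -> 0 <= g k) -> Forall (lat nu) F -> In p F ->
  g p <= fsumR F g.
Proof.
  intros Nn LF. induction LF; intros Ip; [destruct Ip|]. simpl.
  destruct Ip as [-> | Ip].
  - assert (0 <= fsumR l g); [|lra]. apply fsumR_nonneg.
    rewrite Forall_forall in *; intros; apply Nn; auto.
  - specialize (IHLF Ip). specialize (Nn x H). lra.
Qed.

Lemma hsR_lower nu g s p : hsR nu g s -> (forall k, lat nu k -> 0 <= g k) -> lat nu p -> g p <= s.
Proof.
  intros H Nn Lp.
  destruct (Rle_dec (g p) s) as [|Hn]; auto. exfalso.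
  destruct (H (g p - s)) as [F0 [L P]]; [lra|].
  assert (LL : Forall (lat nu) (p :: F0)) by (constructor; auto).
  destruct (ndp_props nu _ LL) as [A [B C]].
  specialize (P _ A B (fun x Hx => C x (or_intror Hx))).
  assert (g p <= fsumR (ndp (p :: F0)) g).
  { apply (fsumR_ge nu); auto. apply C; simpl; auto. }
  apply Rabs_def2 in P. lra.
Qed.

Lemma Cx_ext (z w : Cx) : fst z = fst w -> snd z = snd w -> z = w.
Proof. destruct z, w; simpl; intros -> ->; auto. Qed.

Lemma hs_add nu f g S T : has_sum nu f S -> has_sum nu g T ->
  has_sum nu (fun k => Cadd (f k) (g k)) (Cadd S T).
Proof.
  intros H1 H2. apply hs_of_hsR; simpl.
  - apply hsR_add; [apply hsR_fst|apply hsR_fst]; auto.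
  - apply hsR_add; [apply hsR_snd|apply hsR_snd]; auto.
Qed.

Lemma hs_scal nu f S c : has_sum nu f S -> has_sum nu (fun k => Cmul c (f k)) (Cmul c S).
Proof.
  intros H. apply hs_of_hsR; simpl.
  - apply hsR_add; [apply hsR_scal, hsR_fst; auto|].
    apply (hsR_eqv _ _ (- snd c * snd S)); [apply (hsR_ext nu (fun k => - snd c * snd (f k))); [|apply (hsR_scal _ _ _ (- snd c)), hsR_snd; eauto]|ring].
    intros; simpl; ring.
  - apply hsR_add; apply hsR_scal; [apply hsR_snd|apply hsR_fst]; auto.
Qed.

Lemma hs_ext nu f g S : (forall k, lat nu k -> f k = g k) -> has_sum nu f S -> has_sum nu g S.
Proof.
  intros E H. apply hs_of_hsR.
  - eapply hsR_ext; [|apply hsR_fst; eauto]. intros; simpl; rewrite E; auto.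
  - eapply hsR_ext; [|apply hsR_snd; eauto]. intros; simpl; rewrite E; auto.
Qed.

Lemma hs_eqv nu f S T : has_sum nu f S -> S = T -> has_sum nu f T.
Proof. intros H ->; auto. Qed.

Lemma hs_single nu p f : lat nu p -> (forall k, lat nu k -> k <> p -> f k = C0) ->
  has_sum nu f (f p).
Proof.
  intros Lp Z. apply hs_of_hsR.
  - apply (hsR_single nu p (fun k => fst (f k))); auto. intros; rewrite Z; auto.
  - apply (hsR_single nu p (fun k => snd (f k))); auto. intros; rewrite Z; auto.
Qed.

Lemma hs_zero nu : has_sum nu (fun _ => C0) C0.
Proof.
  intros eps He. exists nil; split; auto. intros F _ _ _.
  assert (fsum F (fun _ => C0) = C0).
  { induction F; simpl; auto. rewrite IHF. unfold Cadd, C0; simpl. f_equal; ring. }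
  rewrite H. unfold Cmod, Csub, C0; simpl.
  replace ((0-0)*(0-0) + (0-0)*(0-0)) with 0 by ring. rewrite sqrt_0. auto.
Qed.

Lemma hs_list {T} nu (L : list T) (F : T -> list Z -> Cx) (V : T -> Cx) :
  (forall j, In j L -> has_sum nu (F j) (V j)) ->
  has_sum nu (fun k => fold_right (fun j acc => Cadd (F j k) acc) C0 L)
    (fold_right (fun j acc => Cadd (V j) acc) C0 L).
Proof.
  induction L; intros H; simpl.
  - apply hs_zero.
  - apply hs_add; [apply H; simpl; auto|]. apply IHL. intros; apply H; simpl; auto.
Qed.

Lemma hs_real_zero nu f S : has_sum nu (fun k => RtoC (f k)) S -> snd S = 0.
Proof. intros H. apply hsR_snd in H. apply (hsR_zero nu). exact H. Qed.

Lemma length_shift (k : list Z) j s : (j < length k)%nat -> length (shift k j s) = length k.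
Proof.
  intros H. unfold shift. rewrite length_app, length_firstn. cbn [length]. rewrite length_skipn. lia.
Qed.

Lemma nth_shift (k : list Z) j s i : (j < length k)%nat ->
  nth i (shift k j s) 0%Z = if Nat.eqb i j then (nth j k 0 + s)%Z else nth i k 0%Z.
Proof.
  intros H. unfold shift.
  assert (Hl : length (firstn j k) = j) by (rewrite length_firstn; lia).
  destruct (lt_eq_lt_dec i j) as [[Hlt|Heq]|Hgt].
  - rewrite app_nth1 by lia. rewrite nth_firstn.
    replace (i <? j)%nat with true by (symmetry; apply Nat.ltb_lt; auto).
    replace (Nat.eqb i j) with false by (symmetry; apply Nat.eqb_neq; lia). auto.
  - subst. rewrite app_nth2 by lia. rewrite Hl, Nat.sub_diag, Nat.eqb_refl. auto.
  - rewrite app_nth2 by lia. rewrite Hl.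
    replace (i - j)%nat with (S (i - j - 1)) by lia. cbn [nth].
    rewrite nth_skipn. replace (S j + (i - j - 1))%nat with i by lia.
    replace (Nat.eqb i j) with false by (symmetry; apply Nat.eqb_neq; lia). auto.
Qed.

Lemma shift_cancel (k : list Z) j s : (j < length k)%nat -> shift (shift k j s) j (- s) = k.
Proof.
  intros H. apply nth_ext with 0%Z 0%Z.
  - rewrite !length_shift; auto. rewrite length_shift; auto.
  - intros n Hn. rewrite nth_shift by (rewrite length_shift; auto).
    rewrite !nth_shift by auto. rewrite Nat.eqb_refl.
    destruct (Nat.eqb n j) eqn:E; [apply Nat.eqb_eq in E; subst; lia|auto].
Qed.

Lemma shift_neq (k : list Z) j s : (j < length k)%nat -> s <> 0%Z -> shift k j s <> k.
Proof.
  intros H Hs E. assert (nth j (shift k j s) 0%Z = nth j k 0%Z) by (rewrite E; auto).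
  rewrite nth_shift, Nat.eqb_refl in H0 by auto. lia.
Qed.

Lemma shift_eq_iff (k m : list Z) j s : length k = length m -> (j < length m)%nat ->
  (shift k j s = m <-> k = shift m j (- s)).
Proof.
  intros El Hj. split.
  - intros <-. rewrite shift_cancel; auto. lia.
  - intros ->. replace s with (- - s)%Z at 2 by lia. apply shift_cancel; auto.
Qed.

Lemma lat_shift nu k j s : lat nu k -> (j < nu)%nat -> lat nu (shift k j s).
Proof. unfold lat; intros H Hj. rewrite length_shift; lia. Qed.

Definition delta (m : list Z) : list Z -> Cx :=
  fun k => if list_eq_dec Z.eq_dec k m then (1, 0) else C0.

Definition J0L (L : list nat) (u : list Z -> Cx) (k : list Z) : Cx :=
  fold_right (fun j acc => Cadd (Cadd (u (shift k j 1%Z)) (u (shift k j (-1)%Z))) acc) C0 L.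

Lemma J0_J0L nu u k : J0 nu u k = J0L (seq 0 nu) u k.
Proof. reflexivity. Qed.

Lemma J0L_lin L A B u w k :
  J0L L (fun k => Cadd (Cmul A (u k)) (Cmul B (w k))) k =
  Cadd (Cmul A (J0L L u k)) (Cmul B (J0L L w k)).
Proof.
  induction L; simpl.
  - unfold Cadd, Cmul, C0; simpl; apply Cx_ext; simpl; ring.
  - rewrite IHL. destruct A, B. unfold Cadd, Cmul; apply Cx_ext; simpl; ring.
Qed.

Definition nbsum (L : list nat) (h : list Z -> Cx) (m : list Z) : Cx :=
  fold_right (fun j acc => Cadd (Cadd (h (shift m j (-1)%Z)) (h (shift m j 1%Z))) acc) C0 L.

Lemma nbsum_conj L u m : nbsum L (fun k => Cconj (u k)) m = Cconj (J0L L u m).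
Proof.
  induction L; unfold nbsum, J0L in *; simpl.
  - apply Cx_ext; simpl; ring.
  - rewrite IHL. unfold Cadd, Cconj; apply Cx_ext; simpl; ring.
Qed.

Lemma delta_shift_single nu m j s h : lat nu m -> (j < nu)%nat ->
  has_sum nu (fun k => Cmul (delta m (shift k j s)) (h k)) (h (shift m j (- s))).
Proof.
  intros Lm Hj.
  set (p := shift m j (- s)).
  assert (Lp : lat nu p) by (apply lat_shift; auto).
  eapply hs_eqv; [apply (hs_single nu p); auto|].
  - intros k Lk Hk. unfold delta.
    destruct (list_eq_dec Z.eq_dec (shift k j s) m) as [E|E].
    + exfalso. apply Hk. unfold p. apply shift_eq_iff; auto; unfold lat in *; lia.
    + unfold Cmul, C0; apply Cx_ext; simpl; ring.
  - unfold delta. destruct (list_eq_dec Z.eq_dec (shift p j s) m) as [E|E].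
    + unfold Cmul; apply Cx_ext; simpl; ring.
    + exfalso. apply E. apply shift_eq_iff; auto; unfold lat in *; lia.
Qed.

Lemma neighbor_sum nu m h L : lat nu m -> (forall j, In j L -> (j < nu)%nat) ->
  has_sum nu (fun k => Cmul (J0L L (delta m) k) (h k)) (nbsum L h m).
Proof.
  intros Lm HL.
  eapply hs_ext; [|apply (hs_list nu L
    (fun j k => Cadd (Cmul (delta m (shift k j 1%Z)) (h k)) (Cmul (delta m (shift k j (-1)%Z)) (h k)))
    (fun j => Cadd (h (shift m j (-1)%Z)) (h (shift m j 1%Z))))].
  - intros k _. clear HL. induction L; simpl.
    + apply Cx_ext; simpl; ring.
    + rewrite IHL. destruct (h k). unfold Cadd, Cmul; apply Cx_ext; simpl; ring.
  - intros j Hj. apply hs_add.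
    + apply (delta_shift_single nu m j 1%Z h Lm (HL j Hj)).
    + replace (shift m j 1%Z) with (shift m j (- (-1))%Z) by reflexivity.
      apply (delta_shift_single nu m j (-1)%Z h Lm (HL j Hj)).
Qed.

Lemma J0L_zero nu L u m : lat nu m -> (forall j, In j L -> (j < nu)%nat) ->
  (forall k, lat nu k -> k <> m -> u k = C0) -> J0L L u m = C0.
Proof.
  intros Lm HL Z. induction L; simpl; auto.
  rewrite IHL by (intros; apply HL; simpl; auto).
  assert (Ha : (a < nu)%nat) by (apply HL; simpl; auto).
  rewrite !Z; try apply lat_shift; auto; try (apply shift_neq; [unfold lat in *; lia|lia]).
  apply Cx_ext; simpl; ring.
Qed.

Definition nsq (z : Cx) : R := fst z * fst z + snd z * snd z.

Lemma delta_same m : delta m m = (1, 0).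
Proof. unfold delta. destruct (list_eq_dec Z.eq_dec m m); congruence. Qed.
Lemma delta_other m k : k <> m -> delta m k = C0.
Proof. unfold delta. destruct (list_eq_dec Z.eq_dec k m); congruence. Qed.

Definition xv (A B : Cx) (u : list Z -> Cx) (m : list Z) : list Z -> Cx :=
  fun k => Cadd (Cmul A (u k)) (Cmul B (delta m k)).

Definition NNf (A B um : Cx) (P : R) : R :=
  nsq A * P + (nsq (Cadd (Cmul A um) B) - nsq A * nsq um).

Lemma sumN nu u m P A B : lat nu m ->
  has_sum nu (fun k => RtoC (Cmod (u k) * Cmod (u k))) (RtoC P) ->
  has_sum nu (fun k => RtoC (Cmod (xv A B u m k) * Cmod (xv A B u m k))) (RtoC (NNf A B (u m) P)).
Proof.
  intros Lm Hu.
  set (r := fun k => RtoC (nsq (xv A B u m k) - nsq A * nsq (u k))).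
  eapply hs_ext; [|eapply hs_eqv; [apply hs_add; [apply (hs_scal _ _ _ (RtoC (nsq A)) Hu)|apply (hs_single nu m r Lm)]|]].
  - intros k _. unfold r. rewrite !Cmod_sq. unfold nsq, RtoC, Cmul, Cadd; apply Cx_ext; simpl; ring.
  - intros k Lk Hk. unfold r, xv. rewrite delta_other by auto. unfold nsq, RtoC, Cmul, Cadd, C0; apply Cx_ext; simpl; ring.
  - unfold r, xv, NNf. rewrite delta_same. unfold nsq, RtoC, Cmul, Cadd; apply Cx_ext; simpl; ring.
Qed.

Definition Wf (lam Jm Z0 dm um A B : Cx) (P : R) : Cx :=
  let XM := Cadd (Cmul A um) B in
  let JX := Cadd (Cadd (Cmul A Jm) (Cmul B Z0)) (Cmul dm XM) in
  Cadd (Cmul (Cmul lam (RtoC (nsq A))) (RtoC P))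
   (Cadd (Cmul (Cmul B (Cconj A)) (Cconj Jm))
     (Csub (Cmul JX (Cconj XM))
        (Cadd (Cmul (Cmul lam (RtoC (nsq A))) (RtoC (nsq um)))
              (Cmul (Cmul B (Cconj A)) (Cmul Z0 (Cconj um)))))).

Lemma eig_J0 nu d u lam k : Jop nu d u k = Cmul lam (u k) ->
  J0 nu u k = Csub (Cmul lam (u k)) (Cmul (d k) (u k)).
Proof.
  unfold Jop, Mult. intros H. rewrite <- H. destruct (J0 nu u k). apply Cx_ext; simpl; ring.
Qed.

Lemma sumW nu d u lam m P A B : lat nu m ->
  has_sum nu (fun k => RtoC (Cmod (u k) * Cmod (u k))) (RtoC P) ->
  (forall k, lat nu k -> Jop nu d u k = Cmul lam (u k)) ->
  has_sum nu (fun k => Cmul (Jop nu d (xv A B u m) k) (Cconj (xv A B u m k)))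
    (Wf lam (J0 nu u m) (J0 nu (delta m) m) (d m) (u m) A B P).
Proof.
  intros Lm Hu Heig.
  set (base := fun k => Cadd (Cmul (Cmul lam (RtoC (nsq A))) (RtoC (Cmod (u k) * Cmod (u k))))
                     (Cmul (Cmul B (Cconj A)) (Cmul (J0 nu (delta m) k) (Cconj (u k))))).
  set (r := fun k => Csub (Cmul (Jop nu d (xv A B u m) k) (Cconj (xv A B u m k))) (base k)).
  assert (HJx : forall k, Jop nu d (xv A B u m) k =
     Cadd (Cadd (Cmul A (J0 nu u k)) (Cmul B (J0 nu (delta m) k))) (Cmul (d k) (xv A B u m k))).
  { intros k. unfold Jop, Mult. rewrite J0_J0L. unfold xv at 1. rewrite J0L_lin. reflexivity. }
  eapply hs_ext; [|eapply hs_eqv; [apply hs_add; [apply hs_add|apply (hs_single nu m r Lm)]|]]; cycle 1.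
  - apply (hs_scal _ _ _ (Cmul lam (RtoC (nsq A))) Hu).
  - apply (hs_scal nu (fun k => Cmul (J0 nu (delta m) k) (Cconj (u k))) (nbsum (seq 0 nu) (fun k => Cconj (u k)) m) (Cmul B (Cconj A))). apply (neighbor_sum nu m (fun k => Cconj (u k)) (seq 0 nu)); auto.
    intros j Hj. apply in_seq in Hj. lia.
  - intros k Lk Hk. unfold r, base. rewrite HJx. rewrite (eig_J0 nu d u lam k (Heig k Lk)).
    unfold xv. rewrite delta_other by auto. rewrite Cmod_sq.
    destruct A, B, lam, (u k), (d k), (J0 nu (delta m) k).
    unfold nsq, RtoC, Cmul, Cadd, Csub, Cconj, C0; apply Cx_ext; simpl; ring.
  - unfold r, base, Wf. rewrite HJx. unfold xv. rewrite delta_same. rewrite Cmod_sq.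
    rewrite nbsum_conj, <- J0_J0L.
    destruct A, B, lam, (u m), (d m), (J0 nu (delta m) m), (J0 nu u m).
    unfold nsq, RtoC, Cmul, Cadd, Csub, Cconj, C0; apply Cx_ext; simpl; ring.
  - intros k _. unfold r, base. unfold Csub, Cadd; apply Cx_ext; simpl; ring.
Qed.

Definition Aof (a : R) (b um : Cx) (P : R) : Cx := Csub (RtoC a) (Cmul b (Cmul (Cconj um) (RtoC (/ P)))).

Lemma alg_N a b um P : P <> 0 ->
  NNf (Aof a b um P) b um P = a * a * P + nsq b * (1 - nsq um / P).
Proof.
  intros HP. destruct b as [b1 b2], um as [u1 u2].
  unfold NNf, Aof, nsq, RtoC, Cmul, Cadd, Csub, Cconj; simpl. field. auto.
Qed.

Definition cof (lam dm um : Cx) : Cx :=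
  let Jm := Csub (Cmul lam um) (Cmul dm um) in
  Csub (Cadd (Cconj Jm) (Cmul dm (Cconj um))) (Cmul lam (Cconj um)).

Definition qof (lam Z0 dm um : Cx) (P : R) : Cx :=
  Wf lam (Csub (Cmul lam um) (Cmul dm um)) Z0 dm um (Aof 0 (1,0) um P) (1,0) P.

Definition Gof (lam dm um : Cx) : Cx :=
  Cadd (Cconj (Csub (Cmul lam um) (Cmul dm um))) (Cmul dm (Cconj um)).

Definition Tsum (lam G E um A B : Cx) (P : R) : Cx :=
  Cadd (Cmul (RtoC (nsq A * P)) lam)
   (Cadd (Cmul (Cmul A lam) (Cmul um (Cconj B)))
     (Cadd (Cmul (Cmul B (Cconj A)) G) (Cmul (RtoC (nsq B)) E))).

Lemma step1 lam Z0 dm um A B P :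
  Wf lam (Csub (Cmul lam um) (Cmul dm um)) Z0 dm um A B P = Tsum lam (Gof lam dm um) (Cadd Z0 dm) um A B P.
Proof.
  destruct A as [A1 A2], B as [b1 b2], um as [u1 u2], lam as [l1 l2], Z0 as [z1 z2], dm as [e1 e2].
  unfold Gof, Tsum, Wf, nsq, RtoC, Cmul, Cadd, Csub, Cconj; apply Cx_ext; simpl; ring.
Qed.

Lemma step2 lam G E a b w P :
  Tsum lam G E (Cmul (RtoC P) (Cconj w)) (Csub (RtoC a) (Cmul b w)) b P =
  Cadd (Cmul (RtoC (a*a*P)) lam) (Cadd (Cmul (RtoC a) (Cmul b (Csub G (Cmul lam (Cmul (RtoC P) w)))))
     (Cmul (RtoC (nsq b)) (Csub E (Cmul (Cconj w) G)))).
Proof.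
  destruct b as [b1 b2], w as [w1 w2], lam as [l1 l2], G as [g1 g2], E as [e1 e2].
  unfold Tsum, nsq, RtoC, Cmul, Cadd, Csub, Cconj; apply Cx_ext; simpl; ring.
Qed.

Lemma alg_W lam Z0 dm um a b P : P <> 0 ->
  Wf lam (Csub (Cmul lam um) (Cmul dm um)) Z0 dm um (Aof a b um P) b P =
  Cadd (Cmul (RtoC (a*a*P)) lam) (Cadd (Cmul (RtoC a) (Cmul b (cof lam dm um)))
     (Cmul (RtoC (nsq b)) (qof lam Z0 dm um P))).
Proof.
  intros HP. unfold qof. rewrite !step1.
  assert (Hc : cof lam dm um = Csub (Gof lam dm um) (Cmul lam (Cconj um))) by reflexivity.
  rewrite Hc. generalize (Gof lam dm um) (Cadd Z0 dm); intros G E.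
  unfold Aof.
  set (w := Cmul (Cconj um) (RtoC (/ P))).
  assert (Hum : um = Cmul (RtoC P) (Cconj w)).
  { unfold w. destruct um. unfold Cmul, Cconj, RtoC; apply Cx_ext; simpl; field; auto. }
  clearbody w. subst um.
  replace (Csub (RtoC 0) (Cmul (1, 0) w)) with (Csub (RtoC 0) (Cmul (1, 0) w)) by reflexivity.
  rewrite !step2.
  assert (Hcw : Cconj (Cmul (RtoC P) (Cconj w)) = Cmul (RtoC P) w).
  { destruct w; unfold Cconj, Cmul, RtoC; apply Cx_ext; simpl; ring. }
  rewrite Hcw.
  destruct b as [b1 b2], w as [w1 w2], lam as [l1 l2], G as [g1 g2], E as [e1 e2].
  unfold nsq, RtoC, Cmul, Cadd, Csub, Cconj; apply Cx_ext; simpl; ring.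
Qed.

Lemma solve2 (P n : R) (c lam q : Cx) : 0 < P -> 0 < n -> 0 < nsq c ->
  exists eps, 0 < eps /\ forall dl : Cx, nsq dl < eps * eps ->
   exists a b, a * a * P + nsq b * n = 1 /\
     Cadd (Cmul (RtoC (a*a*P)) lam) (Cadd (Cmul (RtoC a) (Cmul b c)) (Cmul (RtoC (nsq b)) q))
       = Cadd lam dl.
Proof.
  intros HP Hn Hc.
  destruct c as [c1 c2], lam as [l1 l2], q as [q1 q2].
  unfold nsq in Hc; simpl in Hc.
  set (nc := c1*c1 + c2*c2) in *.
  set (m1 := q1 / n - l1). set (m2 := q2 / n - l2).
  set (K := nc / (n * P)).
  set (mm := m1*m1 + m2*m2).
  assert (HK : 0 < K) by (unfold K; apply Rdiv_lt_0_compat; nra).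
  assert (Hmm : 0 <= mm) by (unfold mm; nra).
  set (eps := K / (4 * (1 + K + mm))).
  assert (He : 0 < eps) by (unfold eps; apply Rdiv_lt_0_compat; lra).
  assert (Heps : 16 * (eps * eps) * ((1 + K + mm) * (1 + K + mm)) = K * K)
    by (unfold eps; field; lra).
  exists eps; split; auto.
  intros [d1 d2] Hd. unfold nsq in Hd; simpl in Hd.
  set (r2 := d1*d1 + d2*d2) in *.
  set (R0 := d1*m1 + d2*m2).
  assert (F1 : R0 * R0 <= r2 * mm).
  { assert (E : r2 * mm - R0 * R0 = (d1*m2 - d2*m1) * (d1*m2 - d2*m1)) by (unfold R0, r2, mm; ring).
    pose proof (Rle_0_sqr (d1*m2 - d2*m1)). unfold Rsqr in *. lra. }
  assert (Hbig : mm + K <= (1 + K + mm) * (1 + K + mm)) by nra.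
  assert (F3 : 16 * (R0 * R0) <= K * K).
  { assert (r2 * mm <= eps * eps * ((1 + K + mm) * (1 + K + mm))).
    { apply Rle_trans with (eps * eps * mm); [nra|]. apply Rmult_le_compat_l; nra. }
    nra. }
  assert (F3' : - (K/4) <= R0 <= K/4) by (split; nra).
  set (Aq := K + mm). set (Bq := K + 2 * R0).
  assert (F4 : 16 * (Aq * r2) <= K * K).
  { assert (Aq * r2 <= eps * eps * ((1 + K + mm) * (1 + K + mm))).
    { apply Rle_trans with (Aq * (eps * eps)); [unfold Aq; nra|]. unfold Aq. nra. }
    nra. }
  set (Dq := Bq * Bq - 4 * Aq * r2).
  assert (HD : 0 <= Dq) by (unfold Dq, Bq; nra).
  set (s := sqrt Dq).
  assert (Hs2 : s * s = Dq) by (apply sqrt_sqrt; auto).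
  assert (Hs0 : 0 <= s) by apply sqrt_pos.
  assert (HBq : K / 2 <= Bq) by (unfold Bq; lra).
  assert (HAq : 0 < Aq) by (unfold Aq; lra).
  assert (Hr2 : 0 <= r2) by (unfold r2; nra).
  assert (Hss : s * s <= Bq * Bq) by (rewrite Hs2; unfold Dq; nra).
  assert (HsB : s <= Bq) by (destruct (Rle_dec s Bq); auto; nra).
  set (t := (Bq - s) / (2 * Aq)).
  assert (Ht0 : 0 <= t) by (unfold t; apply Rmult_le_pos; [lra|]; left; apply Rinv_0_lt_compat; lra).
  assert (Ht1 : t < 1).
  { unfold t. apply (Rmult_lt_reg_r (2 * Aq)); [lra|]. field_simplify; [|lra]. unfold Aq, Bq in *; lra. }
  assert (Hquad : Aq * (t * t) - Bq * t + r2 = 0).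
  { unfold t. field_simplify; [|lra]. unfold Dq in Hs2.
    replace (s ^ 2) with (s * s) by ring. rewrite Hs2. field_simplify; [|lra]. lra. }
  set (a := sqrt ((1 - t) / P)).
  assert (Ha2 : a * a = (1 - t) / P) by (apply sqrt_sqrt; left; apply Rdiv_lt_0_compat; lra).
  assert (Ha0 : 0 < a) by (apply sqrt_lt_R0; apply Rdiv_lt_0_compat; lra).
  set (z1 := d1 - t * m1). set (z2 := d2 - t * m2).
  assert (Hz : z1 * z1 + z2 * z2 = t * (1 - t) * K).
  { unfold z1, z2. unfold Aq, Bq, R0, r2, mm in *. nra. }
  set (b1 := (z1 * c1 + z2 * c2) / (a * nc)).
  set (b2 := (z2 * c1 - z1 * c2) / (a * nc)).
  assert (Hbn : (b1 * b1 + b2 * b2) * n = t).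
  { assert (Hnum : (z1*c1+z2*c2)*(z1*c1+z2*c2) + (z2*c1-z1*c2)*(z2*c1-z1*c2) = (z1*z1+z2*z2)*nc) by (unfold nc; ring).
    assert (Hnc : nc <> 0) by lra. assert (Ha : a <> 0) by lra.
    replace (b1 * b1 + b2 * b2) with ((z1 * z1 + z2 * z2) / ((a * a) * nc)).
    2:{ replace ((z1 * z1 + z2 * z2) / ((a * a) * nc)) with (((z1 * z1 + z2 * z2) * nc) / ((a * a) * nc * nc)) by (field; auto).
        rewrite <- Hnum. unfold b1, b2. field. auto. }
    rewrite Hz, Ha2. unfold K. field. repeat split; lra. }
  exists a, (b1, b2). unfold nsq; simpl. split.
  - rewrite Hbn, Ha2. field. lra.
  - assert (Hbc1 : a * (b1*c1 - b2*c2) = z1).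
    { unfold b1, b2. unfold nc in *. field. split; lra. }
    assert (Hbc2 : a * (b1*c2 + b2*c1) = z2).
    { unfold b1, b2. unfold nc in *. field. split; lra. }
    unfold Cadd, Cmul, RtoC; apply Cx_ext; simpl.
    + replace (a * a * P) with (1 - t) by (rewrite Ha2; field; lra).
      replace (b1 * b1 + b2 * b2) with (t / n) by (rewrite <- Hbn; field; lra).
      replace ((a * b1 - 0 * b2) * c1 - (a * b2 + 0 * b1) * c2) with (a * (b1*c1 - b2*c2)) by ring.
      rewrite Hbc1. unfold z1, m1. field. lra.
    + replace (a * a * P) with (1 - t) by (rewrite Ha2; field; lra).
      replace (b1 * b1 + b2 * b2) with (t / n) by (rewrite <- Hbn; field; lra).
      replace ((a * b1 - 0 * b2) * c2 + (a * b2 + 0 * b1) * c1) with (a * (b1*c2 + b2*c1)) by ring.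
      rewrite Hbc2. unfold z2, m2. field. lra.
Qed.

Lemma nsq_pos z : z <> C0 -> 0 < nsq z.
Proof.
  destruct z as [x y]; unfold nsq; simpl; intros H.
  destruct (Req_dec x 0); destruct (Req_dec y 0); subst; [exfalso; apply H; reflexivity| nra | nra | nra].
Qed.

Lemma nsq_nonneg z : 0 <= nsq z.
Proof. destruct z; unfold nsq; simpl; nra. Qed.

Lemma nsq_zero z : nsq z <= 0 -> z = C0.
Proof.
  intros H. destruct (classic (z = C0)); auto. apply nsq_pos in H0. lra.
Qed.

Lemma mul_zero w z : Cmul w z = C0 -> z <> C0 -> w = C0.
Proof.
  intros H Hz. apply nsq_pos in Hz. destruct w as [w1 w2], z as [z1 z2].
  unfold Cmul, C0, nsq in *; simpl in *. injection H; intros E2 E1.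
  assert (H1 : w1 * (z1*z1+z2*z2) = 0).
  { replace (w1*(z1*z1+z2*z2)) with (z1*(w1*z1 - w2*z2) + z2*(w1*z2+w2*z1)) by ring.
    rewrite E1, E2; ring. }
  assert (H2 : w2 * (z1*z1+z2*z2) = 0).
  { replace (w2*(z1*z1+z2*z2)) with (- z2*(w1*z1 - w2*z2) + z1*(w1*z2+w2*z1)) by ring.
    rewrite E1, E2; ring. }
  apply Rmult_integral in H1; apply Rmult_integral in H2.
  apply Cx_ext; simpl; lra.
Qed.

Lemma adjoint nu d lam u m : lat nu m -> l2 nu u -> (exists k, lat nu k /\ u k <> C0) ->
  (forall k, lat nu k -> Jop nu d u k = Cmul lam (u k)) ->
  in_boundary (Num nu (Jop nu d)) lam -> cof lam (d m) (u m) = C0.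
Proof.
  intros Lm [S Hu] [k0 [Lk0 Hk0]] Heig Hbd.
  destruct (classic (cof lam (d m) (u m) = C0)) as [|Hc]; auto. exfalso.
  assert (HS2 : snd S = 0) by (apply (hs_real_zero nu (fun k => Cmod (u k) * Cmod (u k))); auto).
  set (P := fst S).
  assert (HuP : has_sum nu (fun k => RtoC (Cmod (u k) * Cmod (u k))) (RtoC P)).
  { eapply hs_eqv; [exact Hu|]. apply Cx_ext; simpl; auto. }
  assert (HP : 0 < P).
  { apply hsR_fst in HuP. simpl in HuP.
    eapply Rlt_le_trans; [|apply (hsR_lower nu _ _ k0 HuP); auto].
    - rewrite Cmod_sq. apply nsq_pos; auto.
    - intros k _. rewrite Cmod_sq. apply (nsq_nonneg (u k)). }
  set (n := 1 - nsq (u m) / P).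
  assert (Hn : 0 < n).
  { pose proof (sumN nu u m P (Aof 0 (1,0) (u m) P) (1,0) Lm HuP) as HN.
    rewrite alg_N in HN by lra.
    replace (0 * 0 * P + nsq (1, 0) * (1 - nsq (u m) / P)) with n in HN by (unfold n; unfold nsq; simpl; field; lra).
    apply hsR_fst in HN. simpl in HN.
    assert (Hlow : forall k, lat nu k -> nsq (xv (Aof 0 (1, 0) (u m) P) (1, 0) u m k) <= n).
    { intros k Lk. unfold nsq; rewrite <- Cmod_sq. apply (hsR_lower nu _ _ k HN); auto.
      intros k' _. apply Rle_0_sqr. }
    assert (Hn0 : 0 <= n) by (eapply Rle_trans; [apply nsq_nonneg|apply (Hlow m Lm)]).
    destruct Hn0 as [|Hn0]; auto. exfalso.
    assert (Hum : u m <> C0).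
    { intros E. unfold n in Hn0. rewrite E in Hn0. unfold nsq in Hn0; simpl in Hn0.
      replace (1 - (0 * 0 + 0 * 0) / P) with 1 in Hn0 by (field; lra). lra. }
    assert (Hzero : forall k, lat nu k -> k <> m -> u k = C0).
    { intros k Lk Hk. specialize (Hlow k Lk). rewrite <- Hn0 in Hlow.
      apply nsq_zero in Hlow. unfold xv in Hlow. rewrite delta_other in Hlow by auto.
      apply (mul_zero (u k) (Cmul (Cconj (u m)) (RtoC (/ P)))).
      - destruct (u k), (u m). unfold Aof, Cmul, Cadd, Csub, Cconj, RtoC, C0 in *.
        injection Hlow; intros E2 E1. apply Cx_ext; simpl; nra.
      - intros E. apply Hum. destruct (u m) as [a1 a2]. unfold Cmul, Cconj, RtoC, C0 in E.
        injection E; intros E2 E1.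
        assert (/P <> 0) by (apply Rinv_neq_0_compat; lra).
        apply Cx_ext; simpl.
        + apply (Rmult_eq_reg_r (/ P)); auto. nra.
        + apply (Rmult_eq_reg_r (/ P)); auto. nra. }
    assert (HJ : J0 nu u m = C0).
    { rewrite J0_J0L. apply (J0L_zero nu); auto. intros j Hj; apply in_seq in Hj; lia. }
    pose proof (eig_J0 nu d u lam m (Heig m Lm)) as E. rewrite HJ in E.
    assert (Hl : Csub lam (d m) = C0).
    { apply (mul_zero _ (u m)); auto. rewrite E. destruct lam, (d m), (u m).
      unfold Csub, Cmul; apply Cx_ext; simpl; ring. }
    apply Hc. unfold cof. destruct lam as [l1 l2], (d m) as [e1 e2], (u m) as [u1 u2].
    unfold Csub, Cmul, C0 in Hl. injection Hl; intros.
    unfold Cadd, Csub, Cmul, Cconj, C0; apply Cx_ext; simpl; nra. }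
  set (c := cof lam (d m) (u m)).
  set (Z0 := J0 nu (delta m) m).
  set (q := qof lam Z0 (d m) (u m) P).
  destruct (solve2 P n c lam q HP Hn (nsq_pos c Hc)) as [eps [He Hsol]].
  destruct (Hbd eps He) as [_ [w [Hw Hwd]]].
  apply Hw.
  assert (Hdl : nsq (Csub w lam) < eps * eps).
  { unfold nsq; rewrite <- Cmod_sq.
    assert (0 <= Cmod (Csub w lam)) by (unfold Cmod; apply sqrt_pos). nra. }
  destruct (Hsol _ Hdl) as [a [b [H1 H2]]].
  set (A := Aof a b (u m) P).
  exists (xv A b u m). split; [|split].
  - exists (RtoC (NNf A b (u m) P)). apply sumN; auto.
  - unfold unit_norm. eapply hs_eqv; [apply (sumN nu u m P); auto|].
    unfold A. rewrite alg_N by lra. fold n. rewrite H1. reflexivity.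
  - unfold inner_is. eapply hs_eqv; [apply (sumW nu d u lam m P); auto|].
    rewrite (eig_J0 nu d u lam m (Heig m Lm)). unfold A. rewrite alg_W by lra.
    fold c Z0 q. rewrite H2. destruct w, lam. unfold Cadd, Csub; apply Cx_ext; simpl; ring.
Qed.

Lemma cof_eqs lam dm um : cof lam dm um = C0 ->
  (snd lam - snd dm) * fst um = 0 /\ (snd lam - snd dm) * snd um = 0.
Proof.
  destruct lam as [l1 l2], dm as [e1 e2], um as [u1 u2].
  unfold cof, Cadd, Csub, Cmul, Cconj, C0; simpl. intros H. injection H; intros E2 E1.
  split; nra.
Qed.

Theorem mainTheorem3 (nu : nat) (d : list Z -> Cx) :
  (1 <= nu)%nat -> bounded_on nu d ->
  (forall a : R,
     ~ eigenvalue nu (Jop nu (ReD d)) (RtoC a) ->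
     forall lam : Cx, boundary_eigenvalue nu (Jop nu d) lam -> Re lam <> a) /\
  (forall b : R,
     (forall k, lat nu k -> Im (d k) <> b) ->
     forall lam : Cx, boundary_eigenvalue nu (Jop nu d) lam -> Im lam <> b).
Proof.
  intros _ _. split.
  - intros a Hne lam [[u [Hl2 [Hnz Heig]]] Hbd] Hre. apply Hne.
    exists u. split; [auto|]. split; [auto|].
    intros k Lk.
    destruct (cof_eqs _ _ _ (adjoint nu d lam u k Lk Hl2 Hnz Heig Hbd)) as [E1 E2].
    pose proof (eig_J0 nu d u lam k (Heig k Lk)) as HJ.
    unfold Jop, Mult, ReD, Re in *. rewrite HJ. subst a.
    destruct lam as [l1 l2], (d k) as [e1 e2], (u k) as [u1 u2]. simpl in *.
    unfold Cadd, Csub, Cmul, RtoC; apply Cx_ext; simpl; nra.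
  - intros b Hd lam [[u [Hl2 [Hnz Heig]]] Hbd] Him.
    destruct Hnz as [k0 [Lk0 Hk0]].
    destruct (cof_eqs _ _ _ (adjoint nu d lam u k0 Lk0 Hl2 (ex_intro _ k0 (conj Lk0 Hk0)) Heig Hbd)) as [E1 E2].
    apply (Hd k0 Lk0). unfold Im in *. subst b.
    apply Rmult_integral in E1; apply Rmult_integral in E2.
    destruct E1 as [E1|E1]; [lra|]. destruct E2 as [E2|E2]; [lra|].
    exfalso; apply Hk0. destruct (u k0); simpl in *; subst; reflexivity.
Qed.
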